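(* Let $(X,\tau)$ be a locally convex Hausdorff space, $\widetilde{\tau}$ a locally convex Hausdorff topology on $X$, and suppose $(X,\widetilde{\gamma})$, $\widetilde{\gamma}=\widetilde{\gamma}(\tau,\widetilde{\tau})$, satisfies $(\mathrm{B}\tau\mathrm{B}\widetilde{\gamma})$. Then $(X,\widetilde{\gamma})$ is a semi-Montel space if and only if $(X,\tau)$ satisfies (BBC) for $\widetilde{\tau}$.
   Context: lcH = locally convex Hausdorff. (BBC) for $\widetilde{\tau}$: every $\tau$-bounded subset of $X$ is contained in an absolutely convex $\tau$-bounded $\widetilde{\tau}$-compact set. $\widetilde{\gamma}(\tau,\widetilde{\tau})$: the finest lcH topology on $X$ coinciding with $\widetilde{\tau}$ on all $\tau$-bounded sets; $(X,\widetilde{\gamma})$ satisfies $(\mathrm{B}\tau\mathrm{B}\widetilde{\gamma})$ if a subset of $X$ is $\tau$-bounded iff it is $\widetilde{\gamma}$-bounded. *)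

(* Defs.v *)
From HB Require Import structures.
From mathcomp Require Import all_boot all_order all_algebra.
From mathcomp Require Import all_classical all_reals.
Set Implicit Arguments. Unset Strict Implicit. Unset Printing Implicit Defensive.
Import Order.TTheory GRing.Theory Num.Theory.
Local Open Scope ring_scope.
Local Open Scope classical_set_scope.

Section LCH.
Variables (R : realType) (X : lmodType R).

Definition topology_on (O : set (set X)) : Prop :=
  [/\ O setT, O set0,
      (forall (I : Type) (U : I -> set X), (forall i, O (U i)) -> O (\bigcup_i U i))
    & (forall U V, O U -> O V -> O (U `&` V))].

Definition add_continuous (O : set (set X)) : Prop :=
  forall (x y : X) (W : set X), O W -> W (x + y) ->
    exists U V, [/\ O U, U x, O V, V y &
      forall u v, U u -> V v -> W (u + v)].

Definition scale_continuous (O : set (set X)) : Prop :=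
  forall (a : R) (x : X) (W : set X), O W -> W (a *: x) ->
    exists (e : R) (U : set X), [/\ 0 < e, O U, U x &
      forall (b : R) u, `|b - a| < e -> U u -> W (b *: u)].

Definition hausdorff_on (O : set (set X)) : Prop :=
  forall x y : X, x != y ->
    exists U V, [/\ O U, U x, O V, V y & U `&` V = set0].

Definition convex_set (A : set X) : Prop :=
  forall x y (l : R), A x -> A y -> 0 <= l -> l <= 1 ->
    A (l *: x + (1 - l) *: y).

Definition locally_convex_on (O : set (set X)) : Prop :=
  forall W, O W -> W 0 -> exists U, [/\ O U, U 0, convex_set U & U `<=` W].

Definition lcH (O : set (set X)) : Prop :=
  [/\ topology_on O, add_continuous O, scale_continuous O,
      hausdorff_on O & locally_convex_on O].

Definition bounded_in (O : set (set X)) (B : set X) : Prop :=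
  forall U, O U -> U 0 ->
    exists s : R, 0 < s /\ forall t : R, s < t -> B `<=` [set t *: u | u in U].

Definition abs_convex (A : set X) : Prop :=
  forall x y (a b : R), A x -> A y -> `|a| + `|b| <= 1 -> A (a *: x + b *: y).

Definition compact_in (O : set (set X)) (K : set X) : Prop :=
  forall (I : Type) (U : I -> set X), (forall i, O (U i)) ->
    K `<=` \bigcup_i U i ->
    exists D : set I, finite_set D /\ K `<=` \bigcup_(i in D) U i.

Definition closure_in (O : set (set X)) (A : set X) : set X :=
  [set x | forall U, O U -> U x -> U `&` A !=set0].

Definition coincide_on (O1 O2 : set (set X)) (B : set X) : Prop :=
  (forall U, O1 U -> exists V, O2 V /\ U `&` B = V `&` B) /\
  (forall V, O2 V -> exists U, O1 U /\ U `&` B = V `&` B).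

Definition finer (O1 O2 : set (set X)) : Prop := forall U, O2 U -> O1 U.

Definition is_gamma (t tt g : set (set X)) : Prop :=
  [/\ lcH g,
      (forall B, bounded_in t B -> coincide_on g tt B)
    & (forall g', lcH g' -> (forall B, bounded_in t B -> coincide_on g' tt B) ->
         finer g g')].

Definition BtauBg (t g : set (set X)) : Prop :=
  forall B, bounded_in t B <-> bounded_in g B.

Definition semi_montel (O : set (set X)) : Prop :=
  lcH O /\ forall B, bounded_in O B -> compact_in O (closure_in O B).

Definition BBC (t tt : set (set X)) : Prop :=
  forall B, bounded_in t B ->
    exists K, [/\ B `<=` K, abs_convex K, bounded_in t K & compact_in tt K].

End LCH.

(* Main.v *)
Require Import Defs.
From mathcomp Require Import all_boot all_order all_algebra.
From mathcomp Require Import all_classical all_reals.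
From mathcomp Require Import ring lra.
From mathcomp Require finmap.
Set Implicit Arguments. Unset Strict Implicit. Unset Printing Implicit Defensive.
Import Order.TTheory GRing.Theory Num.Theory.
Local Open Scope ring_scope.
Local Open Scope classical_set_scope.

Section Gen.
Variables (R : realType) (X : lmodType R) (O : set (set X)).
Hypothesis HO : lcH O.

Lemma open_T : O setT. Proof. by have [[h _ _ _] _ _ _ _] := HO. Qed.
Lemma open_0 : O set0. Proof. by have [[_ h _ _] _ _ _ _] := HO. Qed.
Lemma open_I U V : O U -> O V -> O (U `&` V). Proof. by have [[_ _ _ h] _ _ _ _] := HO; apply: h. Qed.

Lemma open_local A : (forall x, A x -> exists U, [/\ O U, U x & U `<=` A]) -> O A.
Proof.
move=> HA.
have /choice [f Hf] : forall x : X, exists U : set X,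
   (A x -> U x) /\ O U /\ U `<=` A.
  move=> x; case: (pselect (A x)) => Ax.
  - by have [U [OU Ux UA]] := HA x Ax; exists U.
  - by exists set0; split => //; split => //; exact: open_0.
have -> : A = \bigcup_i f i.
  apply/seteqP; split => [x Ax|x [i _ fx]].
  - by exists x => //; apply: (Hf x).1.
  - by apply: (Hf i).2.2.
by have [[_ _ Hu _] _ _ _ _] := HO; apply: Hu => i; apply: (Hf i).2.1.
Qed.

Lemma open_trans v W : O W -> O [set u | W (u + v)].
Proof.
move=> OW; apply: open_local => x Wx.
have [_ Had _ _ _] := HO.
have [U [V [OU Ux OV Vv H]]] := Had x v W OW Wx.
by exists U; split => // u Uu; apply: H.
Qed.

Lemma open_scale a W : O W -> O [set u | W (a *: u)].
Proof.
move=> OW; apply: open_local => x Wx.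
have [_ _ Hsc _ _] := HO.
have [e [U [e0 OU Ux H]]] := Hsc a x W OW Wx.
by exists U; split => // u Uu; apply: H => //; rewrite subrr normr0.
Qed.

Definition acx (B : set X) := [set x | forall A, abs_convex A -> B `<=` A -> A x].

Lemma acx_abs B : abs_convex (acx B).
Proof. by move=> x y a b Ax Ay hab A hA BA; apply: (hA x y a b (Ax A hA BA) (Ay A hA BA) hab). Qed.

Lemma sub_acx B : B `<=` acx B.
Proof. by move=> x Bx A _ BA; apply: BA. Qed.

Lemma bounded_acx B : bounded_in O B -> bounded_in O (acx B).
Proof.
move=> HB U OU U0.
have [_ _ Hsc _ Hlc] := HO.
have [V [OV V0 cV VU]] := Hlc U OU U0.
have V00 : V (0 *: (0 : X)) by rewrite scaler0.
have [e [U' [e0 OU' U'0 HU']]] := Hsc 0 0 V OV V00.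
have [s [s0 Hs]] := HB U' OU' U'0.
pose W := [set x | forall c : R, `|c| <= 1 -> V (c *: x)].
have WV : W `<=` V by move=> x /(_ 1); rewrite normr1 scale1r; apply.
have Wabs : forall w1 w2 a b, W w1 -> W w2 -> `|a| + `|b| <= 1 ->
    V (a *: w1 + b *: w2).
  move=> w1 w2 a b W1 W2 hab.
  have [a0|a0] := eqVneq a 0.
    by rewrite a0 scale0r add0r; apply: W2; move: hab; rewrite a0 normr0 add0r.
  have [b0|b0] := eqVneq b 0.
    by rewrite b0 scale0r addr0; apply: W1; move: hab; rewrite b0 normr0 addr0.
  have pa : 0 < `|a| by rewrite normr_gt0.
  have pb : 0 < `|b| by rewrite normr_gt0.
  set S := `|a| + `|b|.
  have S0 : 0 < S by rewrite /S; lra.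
  pose l := `|a| / S.
  have l0 : 0 < l by rewrite /l divr_gt0.
  have e1 : 1 - l = `|b| / S by rewrite /l /S; field; rewrite gt_eqF.
  have l1 : 0 < 1 - l by rewrite e1 divr_gt0.
  have -> : a *: w1 + b *: w2 = l *: ((a / l) *: w1) + (1 - l) *: ((b / (1 - l)) *: w2).
    by rewrite !scalerA (mulrC l) (mulrC (1 - l)) !divfK // gt_eqF.
  apply: cV; [apply: W1|apply: W2|lra|lra].
  - rewrite normf_div (ger0_norm (ltW l0)) /l.
    have -> : `|a| / (`|a| / S) = S by field; rewrite (gt_eqF S0) (gt_eqF pa).
    by [].
  - rewrite normf_div (ger0_norm (ltW l1)) e1.
    have -> : `|b| / (`|b| / S) = S by field; rewrite (gt_eqF S0) (gt_eqF pb).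
    by [].
have Wac : abs_convex W.
  move=> x y a b Wx Wy hab c hc; rewrite scalerDr !scalerA; apply: Wabs => //.
  rewrite !normrM.
  have := normr_ge0 c; have := normr_ge0 a; have := normr_ge0 b; nra.
have W0' : forall u, U' u -> W ((e / 2) *: u).
  move=> u Uu c hc; rewrite scalerA; apply: HU' => //.
  rewrite subr0 normrM (ger0_norm (_ : 0 <= e / 2)); last lra.
  have := normr_ge0 c; nra.
exists (2 * s / e); split; first by rewrite divr_gt0 // mulr_gt0.
move=> r hr.
have r0 : 0 < r by apply: lt_trans hr; rewrite divr_gt0 // mulr_gt0.
have hr' : s < r * e / 2 by move: hr; rewrite ltr_pdivrMr //; lra.
have Bsub : B `<=` [set r *: w | w in W].
  move=> x Bx; have [u U'u <-] := Hs _ hr' x Bx.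
  by exists ((e / 2) *: u); [exact: W0'|rewrite scalerA mulrA].
have rWabs : abs_convex [set r *: w | w in W].
  move=> _ _ a b [w1 W1 <-] [w2 W2 <-] hab.
  exists (a *: w1 + b *: w2); first exact: Wac.
  by rewrite scalerDr !scalerA (mulrC r a) (mulrC r b).
move=> x Ax; have [w Ww <-] := Ax _ rWabs Bsub.
by exists w => //; apply: VU; apply: WV.
Qed.

Lemma closure_abs A : abs_convex A -> abs_convex (closure_in O A).
Proof.
move=> hA x y a b cx cy hab W OW Wxy.
have [_ Had _ _ _] := HO.
have [P [Q [OP Pax OQ Qby PQ]]] := Had _ _ W OW Wxy.
have [x' [Px' Ax']] := cx _ (open_scale a OP) Pax.
have [y' [Qy' Ay']] := cy _ (open_scale b OQ) Qby.
by exists (a *: x' + b *: y'); split; [apply: PQ|apply: hA].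
Qed.

Lemma closure_bounded C : bounded_in O C -> bounded_in O (closure_in O C).
Proof.
move=> HC U OU U0; have [_ Had _ _ _] := HO.
have U00 : U (0 + 0) by rewrite addr0.
have [U1 [U2 [OU1 U10 OU2 U20 H12]]] := Had 0 0 U OU U00.
have [s [s0 Hs]] := HC U2 OU2 U20.
exists s; split => // r hr x cx.
have r0 : r != 0 by rewrite gt_eqF // (lt_trans s0).
pose N := [set y | U1 ((- r^-1) *: y + r^-1 *: x)].
have ON : O N by apply: (open_scale (- r^-1) (open_trans (r^-1 *: x) OU1)).
have Nx : N x by rewrite /N /= scaleNr addNr.
have [c [Nc Cc]] := cx N ON Nx.
have [u U2u cu] := Hs r hr c Cc.
exists (r^-1 *: x); last by rewrite scalerA divff // scale1r.
have -> : r^-1 *: x = ((- r^-1) *: c + r^-1 *: x) + u.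
  by rewrite -cu scalerA mulNr mulVf // scaleN1r addrC addNKr.
by apply: H12.
Qed.

Lemma fin_nbhd x (U : X -> set X) (s : seq X) : (forall i, O (U i)) ->
  (forall i, i \in s -> U i x) ->
  exists N, [/\ O N, N x & forall i, i \in s -> N `<=` U i].
Proof.
move=> OUi; elim: s => [|a s IH] HU.
  by exists setT; split => //; exact: open_T.
have [N [ON Nx HN]] : exists N, [/\ O N, N x & forall i, i \in s -> N `<=` U i].
  by apply: IH => i hi; apply: HU; rewrite inE hi orbT.
exists (N `&` U a); split.
- by apply: open_I.
- by split => //; apply: HU; rewrite mem_head.
- move=> i; rewrite inE => /orP [/eqP -> | hi] y [Ny Uy] //.
  exact: HN.
Qed.

Lemma closure_sub_compact K B : compact_in O K -> B `<=` K ->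
  closure_in O B `<=` K.
Proof.
move=> cK BK x cx; case: (pselect (K x)) => // Kx; exfalso.
have [_ _ _ Hh _] := HO.
have /choice [f Hf] : forall k : X, exists p : set X * set X,
   [/\ O p.1, O p.2, p.1 x, (K k -> p.2 k) & p.1 `&` p.2 = set0].
  move=> k; case: (pselect (K k)) => Kk.
  - have xk : x != k by apply/eqP => xk; apply: Kx; rewrite xk.
    have [U [V [OU Ux OV Vk UV]]] := Hh x k xk.
    by exists (U, V); split.
  - exists (setT, set0); split => //=; [exact: open_T|exact: open_0|exact: setI0].
have Hf2 : forall k, O (f k).2 by move=> k; case: (Hf k).
have Hf1 : forall k, O (f k).1 by move=> k; case: (Hf k).
have [D [fD KD]] : exists D : set X, finite_set D /\ K `<=` \bigcup_(i in D) (f i).2.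
  apply: cK => // k Kk; exists k => //.
  by case: (Hf k) => _ _ _ h _; apply: h.
have [F DF] := (finite_fsetP).1 fD.
have [N [ON Nx HN]] : exists N, [/\ O N, N x & forall i, i \in finmap.enum_fset F -> N `<=` (f i).1].
  by apply: fin_nbhd => // i _; case: (Hf i).
have [y [Ny By]] := cx N ON Nx.
have [k Dk fky] := KD y (BK y By).
have : ((f k).1 `&` (f k).2) y.
  split => //; apply: (HN k) => //.
  by move: Dk; rewrite DF.
by case: (Hf k) => _ _ _ _ ->.
Qed.

Lemma closure_compact K B : compact_in O K -> closure_in O B `<=` K ->
  compact_in O (closure_in O B).
Proof.
move=> cK CK I U OU CU.
pose F (j : option I) := if j is Some i then U i else ~` closure_in O B.
have OF : forall j, O (F j).
  case=> [i|] /=; first exact: OU.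
  apply: open_local => x nx.
  have [V [OV Vx VB]] : exists V, [/\ O V, V x & ~ (V `&` B !=set0)].
    apply: contrapT => hn; apply: nx => V OV Vx; apply: contrapT => hVB.
    by apply: hn; exists V.
  by exists V; split => // y Vy Cy; apply: VB; apply: Cy.
have [D' [fD' KD']] : exists D' : set (option I), finite_set D' /\
    K `<=` \bigcup_(j in D') F j.
  apply: cK => // k Kk.
  case: (pselect (closure_in O B k)) => h.
  - by have [i _ Ui] := CU k h; exists (Some i).
  - by exists None.
exists (Some @^-1` D'); split.
  by apply: finite_preimage => // ? ? _ _ [].
move=> c Cc; have [[i|] Dj Fj] := KD' c (CK c Cc).
- by exists i.
- by exfalso; apply: Fj.
Qed.

End Gen.

Lemma compact_transfer (R : realType) (X : lmodType R) (O1 O2 : set (set X)) K :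
  (forall V, O2 V -> exists U, O1 U /\ U `&` K = V `&` K) ->
  compact_in O1 K -> compact_in O2 K.
Proof.
move=> H cK I V OV KV.
have /choice [f Hf] : forall i, exists U, O1 U /\ U `&` K = V i `&` K.
  by move=> i; apply: H; apply: OV.
have [D [fD KD]] : exists D : set I, finite_set D /\ K `<=` \bigcup_(i in D) f i.
  apply: cK; first by move=> i; apply: (Hf i).1.
  move=> k Kk; have [i _ Vik] := KV k Kk; exists i => //.
  have : (V i `&` K) k by [].
  by rewrite -(Hf i).2; case.
exists D; split => // k Kk; have [i Di fik] := KD k Kk.
exists i => //; have : (f i `&` K) k by [].
by rewrite (Hf i).2; case.
Qed.

Theorem corollary3p14 (R : realType) (X : lmodType R)
    (t tt g : set (set X)) :
  lcH t -> lcH tt -> is_gamma t tt g -> BtauBg t g ->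
  (semi_montel g <-> BBC t tt).
Proof.
move=> _ _ [lg gco _] Hb; split.
- move=> [_ Hsm] B tB.
  have gB : bounded_in g B by apply/Hb.
  have gA := bounded_acx lg gB.
  set K := closure_in g (acx B).
  have gK : bounded_in g K by apply: closure_bounded.
  have tK : bounded_in t K by apply/Hb.
  exists K; split.
  + move=> x Bx U _ Ux; exists x; split => //; exact: sub_acx.
  + by apply: closure_abs => //; exact: acx_abs.
  + exact: tK.
  + apply: (compact_transfer (O1 := g)); first exact: (gco K tK).2.
    exact: Hsm.
- move=> HB; split => // B gB.
  have tB : bounded_in t B by apply/Hb.
  have [K [BK _ tK cK]] := HB B tB.
  have gK : compact_in g K.
    apply: (compact_transfer (O1 := tt)) cK => V gV.
    have [U [OU e]] := (gco K tK).1 V gV.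
    by exists U; split.
  apply: (closure_compact lg gK).
  exact: closure_sub_compact.
Qed.
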